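(* Let $A\in\mathbb{R}^{n\times d}$, $b\in\mathbb{R}^n$, and suppose $Ax=b$ admits a solution $x^*$. Let $w$ be a random variable in $\mathbb{R}^d$, $\mathcal{L}(w) = \mathrm{span}\lbrace z\in\mathbb{R}^n : \mathbb{P}[z'Aw=0]=1\rbrace$, $\mathcal{C}(w) = \mathcal{L}(w)^\perp$, and let $\mathcal{E}(w)$ be the subspace orthogonal to $\mathcal{C}(w)$ with $\mathcal{E}(w)\oplus\mathcal{C}(w)$ equal to the column space of $A$. Let $\lbrace w_\ell:\ell\geq0\rbrace$ be random variables in $\mathbb{R}^d$ with $\mathbb{P}[Aw_\ell\in\mathcal{C}(w)]=1$ for all $\ell$, let $x_0\in\mathbb{R}^d$ be arbitrary, $x_{k+1} = x_k + w_kw_k'A'(b-Ax_k)/\|Aw_k\|_2^2$, and $r_k = Ax_k-b$. Define $\tau_0=0$, $\tau_1 = \min\lbrace k\geq0:\mathrm{span}\lbrace Aw_0,\ldots,Aw_k\rbrace = \mathcal{C}(w)\rbrace$, and for $\ell\geq2$, $\tau_\ell = \min\lbrace k>\tau_{\ell-1}:\mathrm{span}\lbrace Aw_{\tau_{\ell-1}+1},\ldots,Aw_k\rbrace=\mathcal{C}(w)\rbrace$ if $\tau_{\ell-1}<\infty$, else $\tau_\ell=\infty$; for finite stopping times let $\mathcal{F}_\ell$ be the set of matrices whose columns form a maximal linearly independent subset of $\lbrace Aw_{\tau_{\ell-1}+1}/\|Aw_{\tau_{\ell-1}+1}\|_2,\ldots,Aw_{\tau_\ell}/\|Aw_{\tau_\ell}\|_2\rbrace$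 and $\gamma_\ell = 1-\min_{F\in\mathcal{F}_\ell}\det(F'F)$. Then, on the events $\bigcap_{\ell=0}^\infty\lbrace\tau_\ell<\infty\rbrace$ and $\lbrace\lim_{\ell\to\infty}\prod_{j=1}^\ell\gamma_j=0\rbrace$, $\lim_{k\to\infty}Ax_k = b$ if and only if $P_{\mathcal{E}(w)}r_0 = 0$.
   Context: $P_W$ is orthogonal projection onto $W$; $A'$ is the transpose. The iteration presupposes $Aw_k\neq0$. *)

(* Defs.v *)
From HB Require Import structures.
From mathcomp Require Import all_boot all_order all_algebra.
From mathcomp Require Import all_classical all_reals all_analysis.
Set Implicit Arguments. Unset Strict Implicit. Unset Printing Implicit Defensive.
Import Order.TTheory GRing.Theory Num.Theory.
Local Open Scope ring_scope.
Local Open Scope classical_set_scope.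

Section Defs.
Variable R : realType.

Definition dotv n (u v : 'cV[R]_n) : R := \sum_i u i 0 * v i 0.
Definition nrm2 n (v : 'cV[R]_n) : R := Num.sqrt (dotv v v).

Definition span_set n (X : set 'cV[R]_n) : set 'cV[R]_n :=
  [set v | exists m (c : 'I_m -> R) (z : 'I_m -> 'cV[R]_n),
      (forall i, X (z i)) /\ v = \sum_i c i *: z i].

Definition orth_compl n (X : set 'cV[R]_n) : set 'cV[R]_n :=
  [set v | forall z, X z -> dotv z v = 0].

Definition colspace n d (A : 'M[R]_(n, d)) : set 'cV[R]_n :=
  [set v | exists x, v = A *m x].

Definition is_subspace n (X : set 'cV[R]_n) : Prop :=
  X 0 /\ (forall u v, X u -> X v -> X (u + v)) /\ (forall a u, X u -> X (a *: u)).

Definition orth_proj n (W : set 'cV[R]_n) (v : 'cV[R]_n) : 'cV[R]_n :=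
  xget 0 [set p | W p /\ forall u, W u -> dotv u (v - p) = 0].

Definition Lspace dT (T : measurableType dT) (P : probability T R) n d
    (A : 'M[R]_(n, d)) (w : T -> 'cV[R]_d) : set 'cV[R]_n :=
  span_set [set z | P [set t | dotv z (A *m w t) = 0] = 1%E].
Definition Cspace dT (T : measurableType dT) (P : probability T R) n d
    (A : 'M[R]_(n, d)) (w : T -> 'cV[R]_d) : set 'cV[R]_n :=
  orth_compl (Lspace P A w).

(* the iteration x_{k+1} = x_k + w_k w_k' A' (b - A x_k) / ||A w_k||^2,
   along one sample path ws = (w_k(omega))_k *)
Fixpoint iterate n d (A : 'M[R]_(n, d)) (b : 'cV[R]_n) (x0 : 'cV[R]_d)
    (ws : nat -> 'cV[R]_d) (k : nat) : 'cV[R]_d :=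
  match k with
  | 0 => x0
  | k'.+1 => let xk := iterate A b x0 ws k' in
      xk + (nrm2 (A *m ws k') ^+ 2)^-1 *:
             (ws k' *m (ws k')^T *m A^T *m (b - A *m xk))
  end.

Definition spans_block n d (A : 'M[R]_(n, d)) (ws : nat -> 'cV[R]_d)
    (C : set 'cV[R]_n) (a k : nat) : Prop :=
  span_set [set v | exists2 j, (a <= j <= k)%N & v = A *m ws j] = C.

Definition omin (Q : nat -> Prop) : option nat :=
  xget None [set o | match o with
                     | Some k => Q k /\ forall j, Q j -> (k <= j)%N
                     | None => forall k, ~ Q k end].

(* stopping times tau_l (None = infinity), along one sample path *)
Fixpoint tau n d (A : 'M[R]_(n, d)) (ws : nat -> 'cV[R]_d)
    (C : set 'cV[R]_n) (l : nat) : option nat :=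
  match l with
  | 0 => Some 0%N
  | l'.+1 =>
    match l' with
    | 0 => omin (fun k => spans_block A ws C 0 k)
    | _ => match tau A ws C l' with
           | Some m => omin (fun k => (m < k)%N /\ spans_block A ws C m.+1 k)
           | None => None
           end
    end
  end.

Definition block_start n d (A : 'M[R]_(n, d)) (ws : nat -> 'cV[R]_d)
    (C : set 'cV[R]_n) (l : nat) : option nat :=
  if l is 1%N then Some 0%N else omap S (tau A ws C l.-1).

Definition normalize n (v : 'cV[R]_n) : 'cV[R]_n := (nrm2 v)^-1 *: v.

Definition block_vecs n d (A : 'M[R]_(n, d)) (ws : nat -> 'cV[R]_d) (s e : nat)
  : set 'cV[R]_n :=
  [set u | exists2 j, (s <= j <= e)%N & u = normalize (A *m ws j)].

Definition max_indep_cols n m (F : 'M[R]_(n, m)) (S : set 'cV[R]_n) : Prop :=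
  (forall i, S (col i F)) /\ row_free F^T /\
  (forall v, S v -> (forall i, col i F != v) -> ~~ row_free (row_mx F v)^T).

Definition detset n (S : set 'cV[R]_n) : set R :=
  [set x | exists m (F : 'M[R]_(n, m)), max_indep_cols F S /\ x = \det (F^T *m F)].

Definition setmin (D : set R) : R := xget 0 [set x | D x /\ forall y, D y -> x <= y].

Definition gamma n d (A : 'M[R]_(n, d)) (ws : nat -> 'cV[R]_d)
    (C : set 'cV[R]_n) (l : nat) : R :=
  match block_start A ws C l, tau A ws C l with
  | Some s, Some e => 1 - setmin (detset (block_vecs A ws s e))
  | _, _ => 0
  end.

End Defs.

(* Main.v *)
Require Import Defs.
From HB Require Import structures.
From mathcomp Require Import all_boot all_order all_algebra.
From mathcomp Require Import all_classical all_reals all_analysis.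
From mathcomp Require Import ring lra.
Set Implicit Arguments. Unset Strict Implicit. Unset Printing Implicit Defensive.
Import Order.TTheory GRing.Theory Num.Theory.
Import numFieldNormedType.Exports.
Local Open Scope ring_scope.
Local Open Scope classical_set_scope.

Section Basics.
Variable R : realType.
Variable n : nat.
Implicit Types u v w : 'cV[R]_n.

Lemma dotvE u v : dotv u v = (u^T *m v) 0 0.
Proof. by rewrite /dotv mxE; apply: eq_bigr => i _; rewrite mxE. Qed.

Lemma dotvC u v : dotv u v = dotv v u.
Proof. by rewrite /dotv; apply: eq_bigr => i _; rewrite mulrC. Qed.

Lemma dotvDl u v w : dotv (u + v) w = dotv u w + dotv v w.
Proof. by rewrite /dotv -big_split; apply: eq_bigr => i _; rewrite mxE mulrDl. Qed.

Lemma dotvDr u v w : dotv w (u + v) = dotv w u + dotv w v.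
Proof. by rewrite dotvC dotvDl !(dotvC w). Qed.

Lemma dotvZl a u v : dotv (a *: u) v = a * dotv u v.
Proof. by rewrite /dotv mulr_sumr; apply: eq_bigr => i _; rewrite mxE mulrA. Qed.

Lemma dotvZr a u v : dotv v (a *: u) = a * dotv v u.
Proof. by rewrite dotvC dotvZl dotvC. Qed.

Lemma dotvNl u v : dotv (- u) v = - dotv u v.
Proof. by rewrite -scaleN1r dotvZl mulN1r. Qed.

Lemma dotvNr u v : dotv v (- u) = - dotv v u.
Proof. by rewrite dotvC dotvNl dotvC. Qed.

Lemma dotvBl u v w : dotv (u - v) w = dotv u w - dotv v w.
Proof. by rewrite dotvDl dotvNl. Qed.

Lemma dotvBr u v w : dotv w (u - v) = dotv w u - dotv w v.
Proof. by rewrite dotvDr dotvNr. Qed.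

Lemma dotv0l v : dotv 0 v = 0.
Proof. by rewrite /dotv big1 // => i _; rewrite mxE mul0r. Qed.

Lemma dotv0r v : dotv v 0 = 0.
Proof. by rewrite dotvC dotv0l. Qed.

Lemma dotv_ge0 v : 0 <= dotv v v.
Proof. by rewrite /dotv sumr_ge0 // => i _; rewrite -expr2 sqr_ge0. Qed.

Lemma dotv_eq0 v : dotv v v = 0 -> v = 0.
Proof.
move=> H0; apply/matrixP => i j; rewrite ord1 mxE.
have pos : forall k : 'I_n, xpredT k -> 0 <= v k 0 * v k 0.
  by move=> k _; rewrite -expr2 sqr_ge0.
have := @psumr_eq0P _ _ xpredT (fun i => v i 0 * v i 0) pos H0 i isT.
by move/eqP; rewrite mulf_eq0 orbb; move/eqP.
Qed.

Lemma entry_sq_le v i : v i 0 ^+ 2 <= dotv v v.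
Proof.
rewrite /dotv (bigD1 i) //= -expr2 lerDl sumr_ge0 // => k _.
by rewrite -expr2 sqr_ge0.
Qed.

Lemma CauchySchwarz u v : dotv u v ^+ 2 <= dotv u u * dotv v v.
Proof.
have [u0|] := eqVneq u 0; first by rewrite u0 !dotv0l expr0n mul0r.
move=> un0.
have a0 : 0 < dotv u u.
  rewrite lt_def dotv_ge0 andbT; apply/eqP => /dotv_eq0; exact/eqP.
have := dotv_ge0 (dotv u u *: v - dotv u v *: u).
rewrite !(dotvBl, dotvBr, dotvZl, dotvZr) (dotvC v u).
set a := dotv u u; set b := dotv u v; set c := dotv v v => H.
have : 0 <= a * (a * c - b ^+ 2) by move: H; congr (_ <= _); ring.
by rewrite pmulr_rge0 // subr_ge0 mulrC.
Qed.

End Basics.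
Section Basics2.
Variable R : realType.
Variable n : nat.
Implicit Types u v w : 'cV[R]_n.
Lemma dotv_mulmx m (M : 'M[R]_(n, m)) (c : 'cV[R]_m) v :
  dotv (M *m c) v = dotv c (M^T *m v).
Proof. by rewrite !dotvE trmx_mul -mulmxA. Qed.

End Basics2.
Section Meany.
Variable R : realType.
Variable n : nat.
Implicit Types u v w x y z : 'cV[R]_n.

Definition step u r : 'cV[R]_n := r - dotv u r *: u.
Definition Qs (us : seq 'cV[R]_n) r := foldl (fun r u => step u r) r us.
Definition inC {m} (F : 'M[R]_(n, m)) x := exists c, x = F *m c.

Lemma step_add u x z : step u (x + z) = step u x + step u z.
Proof. by rewrite /step dotvDr scalerDl; rewrite opprD addrACA. Qed.

Lemma Qs_add us x z : Qs us (x + z) = Qs us x + Qs us z.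
Proof. by elim: us x z => //= u us IH x z; rewrite step_add IH. Qed.

Lemma Qs_fix us z : (forall u, u \in us -> dotv u z = 0) -> Qs us z = z.
Proof.
elim: us z => //= u us IH z H.
rewrite /step H ?mem_head // scale0r subr0 IH // => v vin.
by apply: H; rewrite in_cons vin orbT.
Qed.

Lemma inC_step m (F : 'M[R]_(n, m)) u x : inC F u -> inC F x -> inC F (step u x).
Proof.
move=> [a ->] [b ->]; exists (b - dotv (F *m a) (F *m b) *: a).
by rewrite /step mulmxBr scalemxAr.
Qed.

Lemma Qs_inC m (F : 'M[R]_(n, m)) us x :
  (forall u, u \in us -> inC F u) -> inC F x -> inC F (Qs us x).
Proof.
elim: us x => //= u us IH x H Hx; apply: IH.
  by move=> v vin; apply: H; rewrite in_cons vin orbT.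
by apply: inC_step => //; apply: H; rewrite mem_head.
Qed.

Lemma step_norm u x : dotv u u = 1 ->
  dotv (step u x) (step u x) = dotv x x - dotv u x ^+ 2.
Proof.
move=> uu; rewrite /step !(dotvBl, dotvBr, dotvZl, dotvZr) uu (dotvC x u).
by rewrite expr2; ring.
Qed.

Lemma step_orth u x : dotv u u = 1 -> dotv u (step u x) = 0.
Proof. by move=> uu; rewrite /step dotvBr dotvZr uu mulr1 subrr. Qed.

Lemma step_le u x : dotv u u = 1 -> dotv (step u x) (step u x) <= dotv x x.
Proof. by move=> uu; rewrite step_norm // lerBlDr lerDl sqr_ge0. Qed.

Lemma Qs_le us x : (forall u, u \in us -> dotv u u = 1) ->
  dotv (Qs us x) (Qs us x) <= dotv x x.
Proof.
elim: us x => //= u us IH x H.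
apply: le_trans (step_le x (H u (mem_head _ _))).
by apply: IH => v vin; apply: H; rewrite in_cons vin orbT.
Qed.

Lemma mulmx11 (a : 'cV[R]_n) (M : 'M[R]_1) : a *m M = M 0 0 *: a.
Proof.
by apply/matrixP => i j; rewrite !mxE big_ord1 (ord1 j) mulrC.
Qed.

Lemma colF_zero m (F : 'M[R]_(n, m)) (c : 'cV[R]_m) : F^T *m (F *m c) = 0 -> F *m c = 0.
Proof. by move=> H; apply: dotv_eq0; rewrite dotv_mulmx H dotv0r. Qed.

Lemma orthF m (F : 'M[R]_(n, m)) (c : 'cV[R]_m) y : F^T *m y = 0 -> dotv (F *m c) y = 0.
Proof. by move=> H; rewrite dotv_mulmx H dotv0r. Qed.

Lemma rowfreeT_inj m (F : 'M[R]_(n, m)) (c : 'cV[R]_m) : row_free F^T -> F *m c = 0 -> c = 0.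
Proof.
move=> rf H; have := mulmx_free_eq0 c^T rf.
rewrite -trmx_mul H trmx0 eqxx => /esym/eqP.
by move=> /(congr1 trmx); rewrite trmxK trmx0.
Qed.

Lemma inj_rowfreeT m (F : 'M[R]_(n, m)) :
  (forall c : 'cV[R]_m, F *m c = 0 -> c = 0) -> row_free F^T.
Proof.
move=> H; apply: inj_row_free => v Hv.
have : F *m v^T = 0 by rewrite -(trmxK F) -trmx_mul Hv trmx0.
by move/H => /(congr1 trmx); rewrite trmxK trmx0.
Qed.

Lemma proj_exists m (F : 'M[R]_(n, m)) v : row_free F^T ->
  exists c, F^T *m (v - F *m c) = 0.
Proof.
move=> rf.
have Gu : F^T *m F \in unitmx.
  rewrite -row_free_unit; apply: inj_row_free => w Hw.
  have : F *m w^T = 0.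
    apply: colF_zero; have : (w *m (F^T *m F))^T = 0 by rewrite Hw trmx0.
    by rewrite trmx_mul trmx_mul trmxK -mulmxA.
  by move=> /(rowfreeT_inj rf) /(congr1 trmx); rewrite trmxK trmx0.
exists (invmx (F^T *m F) *m (F^T *m v)).
by rewrite mulmxBr !mulmxA mulmxV // mul1mx subrr.
Qed.

End Meany.
Section Meany2.
Variable R : realType.
Variable n : nat.
Implicit Types u v w x y z : 'cV[R]_n.

Lemma col_cV (a : 'cV[R]_n) (j : 'I_1) : col j a = a.
Proof. by apply/matrixP => i k; rewrite !mxE !ord1. Qed.

Lemma dotv_orth_sum (a b : 'cV[R]_n) : dotv a b = 0 -> dotv (a + b) (a + b) = dotv a a + dotv b b.
Proof.
by move=> ab; rewrite !(dotvDl, dotvDr) (dotvC b a) ab addr0 add0r.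
Qed.

Lemma meany (us : seq 'cV[R]_n) : (forall u, u \in us -> dotv u u = 1) ->
  exists m (F : 'M[R]_(n, m)),
  [/\ (forall i, col i F \in us), row_free F^T,
      (forall u, u \in us -> inC F u), 0 <= \det (F^T *m F) <= 1 &
      forall x, inC F x ->
        dotv (Qs us x) (Qs us x) <= (1 - \det (F^T *m F)) * dotv x x].
Proof.
elim: us => [_|u us IH H].
  exists 0%N, 0; split.
  - by move=> [].
  - by apply: inj_rowfreeT => c _; apply/matrixP => -[].
  - by [].
  - by rewrite det_mx00 ler01 lexx.
  - by move=> x [c ->]; rewrite mul0mx /= dotv0l mulr0 lexx.
have uu : dotv u u = 1 by apply: H; rewrite mem_head.
have H' : forall v, v \in us -> dotv v v = 1.
  by move=> v vin; apply: H; rewrite in_cons vin orbT.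
have [m' [F' [Fcol Ffree Fin Fdet Fcontr]]] := IH H'.
set g' := \det (F'^T *m F') in Fdet Fcontr.
have /andP[g'0 g'1] := Fdet.
have [[c0 Hc0]|nin] := pselect (inC F' u).
  exists m', F'; split => //.
  - by move=> i; rewrite in_cons Fcol orbT.
  - move=> v; rewrite in_cons => /orP[/eqP->|/Fin//]; by exists c0.
  - move=> x Hx /=; have Hy : inC F' (step u x) by apply: inC_step => //; exists c0.
    apply: le_trans (Fcontr _ Hy) _.
    by apply: ler_wpM2l; [rewrite subr_ge0 | exact: step_le].
have [c0 Hc0] := proj_exists u Ffree.
set p := F' *m c0 in Hc0; set q := u - p in Hc0.
set s2 := dotv q q.
have Fq : F'^T *m q = 0 by [].
have pq : dotv p q = 0 by apply: orthF.
have upq : u = p + q by rewrite /q addrC subrK.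
have s2le : s2 <= 1.
  by rewrite -uu upq dotv_orth_sum // lerDr dotv_ge0.
have s2gt : 0 < s2.
  rewrite lt_def dotv_ge0 andbT; apply/eqP => /dotv_eq0 q0.
  by apply: nin; exists c0; rewrite upq q0 addr0.
have qu : dotv q u = s2 by rewrite upq dotvDr dotvC pq add0r.
pose F := row_mx u F'.
have detF : \det (F^T *m F) = s2 * g'.
  pose L := block_mx (1%:M : 'M[R]_1) 0 c0 (1%:M : 'M[R]_m').
  have FL : F = row_mx q F' *m L.
    by rewrite mul_row_block !mulmx1 !mulmx0 add0r /q subrK.
  rewrite FL trmx_mul -mulmxA (mulmxA (row_mx q F')^T) !det_mulmx det_tr.
  have dL : \det L = 1 by rewrite det_lblock !det1 mulr1.
  rewrite dL mul1r mulr1 tr_row_mx mul_col_row Fq.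
  have -> : q^T *m F' = 0 by rewrite -(trmxK F') -trmx_mul Fq trmx0.
  by rewrite det_lblock det_mx11 -dotvE.
exists (1 + m')%N, F; split.
- move=> i; rewrite -(fintype.splitK i); case: (fintype.split i) => j /=.
    by rewrite colKl col_cV mem_head.
  by rewrite colKr in_cons Fcol orbT.
- apply: inj_rowfreeT => c Hc.
  rewrite -(vsubmxK c) in Hc *.
  move: Hc; rewrite mul_row_col mulmx11.
  set a := usubmx c; set b := dsubmx c => Hab.
  have a0 : a 0 0 = 0.
    apply/eqP/negP => /negP an0; apply: nin.
    exists (- (a 0 0)^-1 *: b).
    apply: (scalerI an0); rewrite -scalemxAr scalerA mulrN mulfV // scaleN1r.
    by apply/eqP; rewrite -subr_eq0 opprK Hab.
  have az : a = 0 by apply/matrixP => i j; rewrite !ord1 a0 mxE.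
  move: Hab; rewrite a0 scale0r add0r => /(rowfreeT_inj Ffree) bz.
  by rewrite az bz col_mx0.
- move=> v; rewrite in_cons => /orP[/eqP->|/Fin [c ->]].
    by exists (col_mx 1 0); rewrite mul_row_col mulmx1 mulmx0 addr0.
  by exists (col_mx 0 c); rewrite mul_row_col mulmx0 add0r.
- rewrite detF mulr_ge0 ?dotv_ge0 //=.
  by rewrite -[1]mulr1 ler_pM // ltW.
- move=> x [cx ->]; rewrite /= detF.
  set X := F *m cx.
  have Hy : inC F (step u X).
    by apply: inC_step; [exists (col_mx 1 0); rewrite mul_row_col mulmx1 mulmx0 addr0 | exists cx].
  have [cy Ecy] := Hy.
  set y := step u X in Ecy Hy *.
  have uy : dotv u y = 0 by apply: step_orth.
  have yX : dotv y y <= dotv X X by apply: step_le.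
  have [cw Hcw] := proj_exists y Ffree.
  set yW := F' *m cw in Hcw; set yP := y - yW in Hcw.
  have yWP : y = yW + yP by rewrite /yP addrC subrK.
  have QyP : Qs us yP = yP.
    by apply: Qs_fix => v /Fin [c ->]; apply: orthF.
  have QyWin : inC F' (Qs us yW) by apply: Qs_inC => //; exists cw.
  have orthQ : dotv (Qs us yW) yP = 0 by case: QyWin => c ->; apply: orthF.
  have nQ : dotv (Qs us y) (Qs us y) = dotv (Qs us yW) (Qs us yW) + dotv yP yP.
    by rewrite yWP Qs_add QyP dotv_orth_sum.
  have nY : dotv y y = dotv yW yW + dotv yP yP by rewrite {1 2}yWP dotv_orth_sum // orthF.
  have IHy := Fcontr yW (ex_intro _ cw erefl).
  set al := (usubmx cy) 0 0.
  have E : yP - al *: q = F' *m (dsubmx cy - cw + al *: c0).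
    rewrite /yP Ecy -{1}(vsubmxK cy) mul_row_col mulmx11 /q /p.
    rewrite !mulmxDr mulmxN -scalemxAr -/al scalerBr -/yW.
    rewrite !opprD !addrA opprK; congr (_ + _).
    by rewrite -(addrA (al *: u)) (addrC (al *: u)) addrK.
  have yPq : yP = al *: q.
    apply/eqP; rewrite -subr_eq0; apply/eqP; rewrite E; apply: colF_zero.
    by rewrite -E mulmxBr Hcw -scalemxAr Fq scaler0 subr0.
  have nP : dotv yP yP = al ^+ 2 * s2 by rewrite yPq dotvZl dotvZr mulrA expr2.
  have qy : dotv q y = al * s2.
    by rewrite yWP dotvDr (dotvC q) orthF // add0r yPq dotvZr.
  clearbody y q.
  have CS := CauchySchwarz (q - s2 *: u) y.
  rewrite dotvBl dotvZl uy mulr0 subr0 qy in CS.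
  rewrite !(dotvBl, dotvBr, dotvZl, dotvZr) uu qu (dotvC u q) qu -/s2 in CS.
  have key : al ^+ 2 * s2 <= (1 - s2) * dotv y y.
    have H2 : s2 * (al ^+ 2 * s2) <= s2 * ((1 - s2) * dotv y y).
      by move: CS; congr (_ <= _); ring.
    by rewrite -(ler_pM2l s2gt).
  rewrite nQ.
  have Wge := dotv_ge0 yW.
  have Pge := dotv_ge0 yP.
  have Xge := dotv_ge0 X.
  rewrite nY nP in key yX.
  rewrite nP.
  have h1 : 0 <= 1 - s2 * g' by rewrite subr_ge0 -[1]mulr1 ler_pM // ltW.
  apply: le_trans (_ : (1 - s2 * g') * (dotv yW yW + al ^+ 2 * s2) <= _); last first.
    by apply: ler_wpM2l.
  nra.
Qed.

End Meany2.
Section Iter.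
Variable R : realType.
Variables n d : nat.
Variable A : 'M[R]_(n, d).
Variable b : 'cV[R]_n.
Variable W : nat -> 'cV[R]_d.
Variable x0 : 'cV[R]_d.
Hypothesis AW0 : forall k, A *m W k != 0.

Definition rr k := A *m iterate A b x0 W k - b.
Definition uu k := normalize (A *m W k).

Lemma nrm2_sq (a : 'cV[R]_n) : nrm2 a ^+ 2 = dotv a a.
Proof. by rewrite /nrm2 sqr_sqrtr // dotv_ge0. Qed.

Lemma dotv_neq0 (a : 'cV[R]_n) : a != 0 -> dotv a a != 0.
Proof. by move=> a0; apply/eqP => /dotv_eq0 /eqP; apply/negP. Qed.

Lemma uu_unit k : dotv (uu k) (uu k) = 1.
Proof.
rewrite /uu /normalize dotvZl dotvZr mulrA -expr2 exprVn nrm2_sq mulVf //.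
exact: dotv_neq0.
Qed.

Lemma rr_step k : rr k.+1 = step (uu k) (rr k).
Proof.
rewrite /rr /= /step /uu /normalize dotvZl scalerA.
set a := A *m W k; set xk := iterate A b x0 W k.
rewrite mulmxDr -scalemxAr.
have -> : A *m (W k *m (W k)^T *m A^T *m (b - A *m xk)) = dotv a (b - A *m xk) *: a.
  by rewrite -!mulmxA mulmxA (mulmxA (W k)^T) -trmx_mul mulmx11 -dotvE.
have -> : b - A *m xk = - (A *m xk - b) by rewrite opprB.
rewrite dotvNr scaleNr scalerN scalerA addrAC; congr (_ - _ *: _).
by rewrite [RHS]mulrAC -expr2 exprVn.
Qed.

Lemma rr_iter s m :
  rr (s + m) = Qs [seq uu j | j <- iota s m] (rr s).
Proof.
elim: m => [|m IH]; first by rewrite addn0.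
have -> : iota s m.+1 = iota s m ++ [:: (s + m)%N] by rewrite -addn1 iotaD.
by rewrite addnS rr_step IH map_cat /Qs foldl_cat.
Qed.

Lemma rr_mono k m : (k <= m)%N -> dotv (rr m) (rr m) <= dotv (rr k) (rr k).
Proof.
move=> /subnK <-; elim: (m - k)%N => [|j IH] //=.
by rewrite addSn rr_step; apply: le_trans (step_le _ (uu_unit _)) IH.
Qed.

End Iter.
Lemma omin_some (Q : nat -> Prop) k : omin Q = Some k -> Q k.
Proof.
rewrite /omin; case: xgetP => [x -> Px|_] //.
by move=> xk; move: Px; rewrite xk => -[].
Qed.

Section Blocks.
Variable R : realType.
Variables n d : nat.
Variable A : 'M[R]_(n, d).
Variable W : nat -> 'cV[R]_d.
Variable C : set 'cV[R]_n.
Hypothesis tauNN : forall l, tau A W C l <> None.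

Definition ee l := odflt 0%N (tau A W C l).
Lemma tauE l : tau A W C l = Some (ee l).
Proof. by rewrite /ee; move: (@tauNN l); case: (tau A W C l). Qed.

Definition eb l := ee l.+1.
Definition sb l := if l is l'.+1 then (eb l').+1 else 0%N.

Lemma spans0 : spans_block A W C 0 (eb 0).
Proof. by have := tauE 1; rewrite /= => /omin_some. Qed.

Lemma tau_SS l : tau A W C l.+2 = match tau A W C l.+1 with
  | Some m => omin (fun k => (m < k)%N /\ spans_block A W C m.+1 k)
  | None => None end.
Proof. by []. Qed.

Lemma spansS l : (eb l < eb l.+1)%N /\ spans_block A W C (eb l).+1 (eb l.+1).
Proof.
have := tauE l.+2; rewrite tau_SS tauE.
by move=> /(@omin_some (fun k => (ee l.+1 < k)%N /\ spans_block A W C (ee l.+1).+1 k)).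
Qed.

Lemma spansE l : spans_block A W C (sb l) (eb l).
Proof. by case: l => [|l]; [exact: spans0 | case: (spansS l)]. Qed.

Lemma sb_le l : (sb l <= eb l)%N.
Proof. by case: l => [|l] //; case: (spansS l). Qed.

Lemma eb_ge l : (l <= eb l)%N.
Proof.
elim: l => [|l IH] //; case: (spansS l) => H _.
exact: leq_ltn_trans IH H.
Qed.

Lemma gammaE l : gamma A W C l.+1 = 1 - setmin (detset (block_vecs A W (sb l) (eb l))).
Proof.
case: l => [|l]; rewrite /gamma /block_start; first by rewrite tauE.
by rewrite [tau _ _ _ l.+2]tauE [tau _ _ _ l.+1]tauE.
Qed.

Lemma covering k : exists l, (sb l <= k <= eb l)%N.
Proof.
suff H : forall l k, (k <= eb l)%N -> exists l', (sb l' <= k <= eb l')%N.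
  by apply: (H k); apply: eb_ge.
elim=> [|l IH] k0 hk; first by exists 0%N.
have [hl|hl] := leqP k0 (eb l); first exact: IH.
by exists l.+1; rewrite /= hl hk.
Qed.

Lemma span_single (X : set 'cV[R]_n) v : X v -> span_set X v.
Proof.
move=> Xv; exists 1%N, (fun _ => 1), (fun _ => v); split => //.
by rewrite big_ord1 scale1r.
Qed.

Lemma AW_in_C k : C (A *m W k).
Proof.
have [l /andP[h1 h2]] := covering k.
have := spansE l; rewrite /spans_block => <-.
by apply: span_single; exists k => //; rewrite h1 h2.
Qed.

End Blocks.
Lemma setmin_le (R : realType) (D : set R) y : D y -> 0 <= y -> setmin D <= y.
Proof.
move=> Dy y0; rewrite /setmin; case: xgetP => [x -> [_ Hx]|_] //.
exact: Hx.
Qed.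

Lemma inC_span (R : realType) n m (F : 'M[R]_(n, m)) (X : set 'cV[R]_n) v :
  (forall z, X z -> inC F z) -> span_set X v -> inC F v.
Proof.
move=> HX [k [c [z [Xz ->]]]].
have [dd Hd] := choice (fun i => HX _ (Xz i)).
exists (\sum_i c i *: dd i); rewrite mulmx_sumr; apply: eq_bigr => i _.
by rewrite Hd scalemxAr.
Qed.

Section Contract.
Variable R : realType.
Variables n d : nat.
Variable A : 'M[R]_(n, d).
Variable b : 'cV[R]_n.
Variable W : nat -> 'cV[R]_d.
Variable x0 : 'cV[R]_d.
Variable C : set 'cV[R]_n.
Hypothesis tauNN : forall l, tau A W C l <> None.
Hypothesis AW0 : forall k, A *m W k != 0.

Lemma nrm2_neq0 (a : 'cV[R]_n) : a != 0 -> nrm2 a != 0.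
Proof.
move=> a0; apply/eqP => h; have := dotv_neq0 a0.
by rewrite -nrm2_sq h expr0n /= eqxx.
Qed.

Lemma normalizeK (a : 'cV[R]_n) : a != 0 -> nrm2 a *: normalize a = a.
Proof. by move=> a0; rewrite /normalize scalerA mulfV ?scale1r // nrm2_neq0. Qed.

Lemma block_contract l :
  C (rr A b W x0 (sb A W C l)) ->
  dotv (rr A b W x0 (sb A W C l.+1)) (rr A b W x0 (sb A W C l.+1)) <=
  `|gamma A W C l.+1| * dotv (rr A b W x0 (sb A W C l)) (rr A b W x0 (sb A W C l)).
Proof.
move=> Cx.
set s := sb A W C l; set e := eb A W C l.
have sle : (s <= e)%N by apply: sb_le.
have sle1 : (s <= e.+1)%N by exact: leq_trans sle (leqnSn e).
have -> : sb A W C l.+1 = (s + (e.+1 - s))%N by rewrite subnKC // ltnW.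
rewrite rr_iter //.
set us := [seq uu A W j | j <- iota s (e.+1 - s)].
have usU : forall u, u \in us -> dotv u u = 1.
  by move=> u /mapP [j _ ->]; apply: uu_unit.
have memus : forall j, (s <= j <= e)%N -> uu A W j \in us.
  move=> j /andP[h1 h2]; apply: map_f; rewrite mem_iota h1 /= (subnKC sle1) ltnS //.
have [m [F [Fcol Ffree Fin Fdet Fcontr]]] := meany usU.
set x := rr A b W x0 s.
have xF : inC F x.
  have := spansE tauNN l; rewrite /spans_block -/s -/e => HC.
  have Hs : span_set [set v | exists2 j, (s <= j <= e)%N & v = A *m W j] x.
    by rewrite HC.
  apply: (inC_span _ Hs) => z [j hj ->].
  have [c Hc] := Fin _ (memus j hj).
  exists (nrm2 (A *m W j) *: c); rewrite -scalemxAr -Hc.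
  by rewrite /uu normalizeK.
apply: le_trans (Fcontr x xF) _.
have Xge := dotv_ge0 x.
apply: ler_wpM2r => //; rewrite gammaE //.
apply: le_trans _ (ler_norm _); rewrite lerD2l lerN2.
apply: setmin_le; last by case/andP: Fdet.
exists m, F; split; last by []. rewrite /max_indep_cols; split; last split => //.
- move=> i; have /mapP [j hj ->] := Fcol i.
  exists j => //; move: hj; rewrite mem_iota (subnKC sle1).
  by move=> /andP[-> /=]; rewrite ltnS.
- move=> v [j hj ->] _; apply/negP => rf.
  have [c Hc] := Fin _ (memus j hj).
  have := rowfreeT_inj (c := col_mx c (-1)) rf.
  rewrite mul_row_col -Hc mulmxN mulmx1 subrr => /(_ erefl).
  move=> /(congr1 (fun M => dsubmx M 0 0)); rewrite col_mxKd !mxE /=.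
  by move/eqP; rewrite oppr_eq0 oner_eq0.
Qed.

End Contract.
Section Final.
Variable R : realType.
Variable n : nat.

Lemma oc_add (X : set 'cV[R]_n) u v : orth_compl X u -> orth_compl X v -> orth_compl X (u + v).
Proof. by move=> hu hv z Xz; rewrite dotvDr hu // hv // addr0. Qed.

Lemma oc_scale (X : set 'cV[R]_n) a u : orth_compl X u -> orth_compl X (a *: u).
Proof. by move=> hu z Xz; rewrite dotvZr hu // mulr0. Qed.

Lemma oc_step (X : set 'cV[R]_n) u v : orth_compl X u -> orth_compl X v ->
  orth_compl X (step u v).
Proof. by move=> hu hv; rewrite /step; apply: oc_add => //; rewrite -scaleN1r scalerA; apply: oc_scale. Qed.

Lemma orth_projE (E : set 'cV[R]_n) v e c : is_subspace E -> E e ->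
  (forall e', E e' -> dotv e' c = 0) -> v = e + c -> orth_proj E v = e.
Proof.
move=> [E0 [EA ES]] Ee Hc ->; rewrite /orth_proj; apply: xget_unique.
  by split => // u Eu; rewrite addrAC subrr add0r Hc.
move=> p [Ep Hp].
have Edp : E (p - e) by apply: EA => //; rewrite -scaleN1r; apply: ES.
have h1 := Hp _ Edp; have h2 : dotv (p - e) c = 0 by apply: Hc.
have ecp : e + c - p = c - (p - e) by rewrite opprB addrCA addrA.
have : dotv (p - e) (p - e) = 0.
  by move: h1; rewrite ecp dotvBr h2 sub0r => /eqP; rewrite oppr_eq0 => /eqP.
by move=> /dotv_eq0 /eqP; rewrite subr_eq0 => /eqP.
Qed.
End Final.
Unset Implicit Arguments.

Theorem mainTheorem13 (R : realType) (dT : measure_display) (T : measurableType dT)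
  (P : probability T R) (n d : nat) (A : 'M[R]_(n, d)) (b : 'cV[R]_n)
  (w : T -> 'cV[R]_d) (ws : nat -> T -> 'cV[R]_d) (x0 : 'cV[R]_d)
  (E : set 'cV[R]_n) :
  (exists xs : 'cV[R]_d, A *m xs = b) ->
  (forall i, measurable_fun setT (fun t => w t i 0)) ->
  (forall l i, measurable_fun setT (fun t => ws l t i 0)) ->
  is_subspace E ->
  (forall e c, E e -> Cspace P A w c -> dotv e c = 0) ->
  (forall v, colspace A v <-> exists e c, E e /\ Cspace P A w c /\ v = e + c) ->
  (forall l, P [set t | Cspace P A w (A *m ws l t)] = 1%E) ->
  (forall k t, A *m ws k t != 0) ->
  forall t : T,
    (forall l, tau A (fun k => ws k t) (Cspace P A w) l <> None) ->
    (fun l => \prod_(1 <= j < l.+1) gamma A (fun k => ws k t) (Cspace P A w) j)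
        @ \oo --> (0 : R) ->
    ((fun k => A *m iterate A b x0 (fun k => ws k t) k) @ \oo --> b
     <-> orth_proj E (A *m x0 - b) = 0).
Proof.
move=> [xs Hxs] _ _ Esub Eorth Hcol _ AW0 t.
set Wt := fun k => ws k t.
set C := Cspace P A w.
move=> tauNN prodcvg.
have AWt : forall k, A *m Wt k != 0 by move=> k; exact: AW0.
have CinC : forall k, C (A *m Wt k) by move=> k; exact: AW_in_C tauNN k.
have Cuu : forall k, C (uu A Wt k).
  by move=> k; rewrite /uu /normalize; apply: oc_scale; exact: CinC.
set r := rr A b Wt x0.
have rS : forall k, r k.+1 = step (uu A Wt k) (r k).
  by move=> k; rewrite /r rr_step.
have [e0 [c0 [Ee0 [Cc0 re]]]] : exists e c, E e /\ C c /\ A *m x0 - b = e + c.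
  by apply/Hcol; exists (x0 - xs); rewrite mulmxBr Hxs.
have -> : orth_proj E (A *m x0 - b) = e0.
  by apply: (orth_projE Esub Ee0 _ re) => e' Ee'; apply: Eorth.
have r0 : r 0 = e0 + c0 by rewrite -re.
have inv : forall k, dotv e0 (r k) = dotv e0 e0.
  elim=> [|k IH]; first by rewrite r0 dotvDr (Eorth _ _ Ee0 Cc0) addr0.
  by rewrite rS /step dotvBr dotvZr (Eorth _ _ Ee0 (Cuu k)) mulr0 subr0.
have entry_le : forall (M : 'cV[R]_n) i, `|M i 0| <= `|M|.
  move=> M i; rewrite [leRHS]/Num.norm /= mx_normrE.
  by apply/bigmax_geP; right; exists (i, 0).
split.
- move=> cv; apply: dotv_eq0; apply/eqP/negP => /negP D0.
  have Dpos : 0 < dotv e0 e0 by rewrite lt_def D0 dotv_ge0.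
  set D := dotv e0 e0 in Dpos inv *.
  set S := \sum_i `|e0 i 0|.
  have S0 : 0 <= S by apply: sumr_ge0 => i _; exact: normr_ge0.
  have S1 : 0 < S + 1 by lra.
  set eps := D / (S + 1).
  have eps0 : 0 < eps by rewrite divr_gt0.
  move/cvgrPdist_lt: cv => /(_ eps eps0) [N _ HN].
  have HNN := HN N (leqnn N); rewrite /= in HNN.
  have ent : forall i, `|r N i 0| < eps.
    move=> i; apply: le_lt_trans HNN.
    have -> : `|r N i 0| = `|(b - A *m iterate A b x0 Wt N) i 0|.
      by rewrite /r /rr !mxE -normrN opprB.
    exact: entry_le.
  have H1 : D <= S * eps.
    rewrite -(inv N) /dotv; apply: le_trans (ler_norm _) _.
    apply: le_trans (ler_norm_sum _ _ _) _; rewrite /S mulr_suml.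
    apply: ler_sum => i _; rewrite normrM; apply: ler_wpM2l => //.
    exact: ltW (ent i).
  have H2 : S * eps < D.
    by rewrite /eps mulrA ltr_pdivrMr //; nra.
  by have := lt_le_trans H2 H1; rewrite ltxx.
- move=> e00; rewrite e00 add0r in r0.
  have rC : forall k, C (r k).
    elim=> [|k IH]; first by rewrite r0.
    by rewrite rS; apply: oc_step => //; exact: Cuu.
  have bound : forall L, dotv (r (sb A Wt C L)) (r (sb A Wt C L)) <=
      `|\prod_(1 <= j < L.+1) gamma A Wt C j| * dotv (r 0) (r 0).
    elim=> [|L IH]; first by rewrite /= big_geq // normr1 mul1r.
    apply: le_trans (block_contract tauNN AWt (rC _)) _.
    rewrite big_nat_recr //= normrM [`|_| * `|gamma _ _ _ _|]mulrC -mulrA.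
    by apply: ler_wpM2l.
  apply/cvgrPdist_lt => eps eps0.
  set D0 := dotv (r 0) (r 0).
  have D00 : 0 <= D0 by apply: dotv_ge0.
  have D01 : 0 < D0 + 1 by lra.
  set delta := eps ^+ 2 / (D0 + 1).
  have delta0 : 0 < delta by rewrite divr_gt0 // exprn_gt0.
  move/cvgrPdist_lt: prodcvg => /(_ delta delta0) [N _ HN].
  have HNN := HN N (leqnn N); rewrite /= sub0r normrN in HNN.
  exists (sb A Wt C N) => // k /= hk.
  have rk : dotv (r k) (r k) < eps ^+ 2.
    apply: le_lt_trans (rr_mono b x0 AWt hk) _.
    apply: le_lt_trans (bound N) _.
    apply: le_lt_trans (_ : delta * D0 < _).
      by apply: ler_wpM2r => //; exact: ltW.
    rewrite /delta mulrAC ltr_pdivrMr //; nra.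
  rewrite [ltLHS]/Num.norm /= mx_normrE; apply/bigmax_ltP; split => // -[i j] _ /=.
  rewrite (ord1 j).
  have -> : (b - A *m iterate A b x0 Wt k) i 0 = - r k i 0.
    by rewrite /r /rr !mxE opprB.
  rewrite normrN.
  have hsq := entry_sq_le (r k) i.
  have a0 : 0 <= `|r k i 0| by [].
  have hsq2 : `|r k i 0| ^+ 2 < eps ^+ 2.
    by rewrite real_normK ?num_real //; apply: le_lt_trans hsq rk.
  nra.
Qed.
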